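(* $\mathcal{B}$ and $\mathcal{B}_{\mathcal{U}}$ are weak quadratic algebras, and $\widehat{\mu}$ is a $q$-measure on the weak quadratic algebra $\mathcal{B}$ that extends $\mu$ (i.e. $\mathcal{C}\subseteq\mathcal{B}$ and $\widehat{\mu}=\mu$ on $\mathcal{C}$).
   Context: For $n\ge1$, $\Omega_n$ is the set of strings $\alpha_0\alpha_1\cdots\alpha_n$ with $\alpha_k\in\{0,1\}$, $\alpha_0=0$. For $\omega=\alpha_0\cdots\alpha_n$, $\omega'=\alpha'_0\cdots\alpha'_n\in\Omega_n$ let $D^n(\omega,\omega')=2^{-n}\prod_{k=1}^n i^{|\alpha_k-\alpha_{k-1}|}\prod_{k=1}^n i^{-|\alpha'_k-\alpha'_{k-1}|}\,\delta_{\alpha_n\alpha'_n}$ ($i=\sqrt{-1}$) and for $A\subseteq\Omega_n$, $\mu_n(A)=\sum_{\omega,\omega'\in A}D^n(\omega,\omega')$. $\Omega$ is the set of infinite sequences $\alpha_0\alpha_1\cdots$ with $\alpha_k\in\{0,1\}$, $\alpha_0=0$. A cylinder set is a set $\{\alpha_0\alpha_1\cdots\in\Omega:\alpha_0\cdots\alpha_n\in E\}$ with $E\subseteq\Omega_n$; $\mathcal{C}$ is the collection of cylinder sets and $\mu$ of such a set is $\mu_n(E)$ (well defined). For $A\subseteq\Omega$ and $n\ge0$, $A^{(n)}=\{\omega\in\Omega:\text{some }\omega'\in A\text{ has the same first }n+1\text{ entries as }\omega\}$. $A$ is beneficial if $\lim_n\mu(A^{(n)})$ exists and is finite, and then $\widehat{\mu}(A)=\lim_n\mu(A^{(n)})$;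 $\mathcal{B}$ is the collection of beneficial sets. $A$ is an upper set if $A=\bigcup_n\big(\Omega\setminus(\Omega\setminus A)^{(n)}\big)$; $\mathcal{U}$ is the collection of upper sets and $\mathcal{B}_{\mathcal{U}}=\{A\in\mathcal{U}:\lim_n\mu(\Omega\setminus(\Omega\setminus A)^{(n)})\text{ exists}\}$. Sets $A,B\subseteq\Omega$ are strongly disjoint if $A^{(n)}\cap B^{(n)}=\emptyset$ for some $n$. A collection $Q\subseteq 2^\Omega$ is a weak quadratic algebra if $\emptyset,\Omega\in Q$ and whenever $A,B,C\in Q$ are (pairwise) strongly disjoint with $A\cup B,A\cup C,B\cup C\in Q$, then $A\cup B\cup C\in Q$. A $q$-measure on a weak quadratic algebra $Q$ is a map $\nu:Q\to[0,\infty)$ such that for such $A,B,C$: $\nu(A\cup B\cup C)=\nu(A\cup B)+\nu(A\cup C)+\nu(B\cup C)-\nu(A)-\nu(B)-\nu(C)$. *)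

(* Defs.v *)
From HB Require Import structures.
From mathcomp Require Import all_boot all_order all_algebra.
From mathcomp Require Import all_classical all_reals all_analysis.
From mathcomp Require Import complex.
Import ComplexField.
Import numFieldNormedType.Exports.
Set Implicit Arguments. Unset Strict Implicit. Unset Printing Implicit Defensive.
Import Order.TTheory GRing.Theory Num.Theory.
Local Open Scope classical_set_scope.
Local Open Scope ring_scope.

Definition Omega : Type := {s : nat -> bool | s 0%N = false}.

Definition Omegan (n : nat) : finType :=
  {f : {ffun 'I_n.+1 -> bool} | f ord0 == false}.

Section Defs.
Variable R : realType.

Local Notation C := (complex.complex R).
Definition iC : C := complex.Complex 0 1.

(* |alpha_k - alpha_{k-1}| for 1 <= k <= n, with alpha, indices as nat *)
Definition jump (n : nat) (w : Omegan n) (k : nat) : nat :=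
  (sval w (inord k) != sval w (inord k.-1)).

Definition Dn (n : nat) (w w' : Omegan n) : C :=
  (2 ^+ n)^-1 *
  (\prod_(1 <= k < n.+1) iC ^+ jump w k) *
  (\prod_(1 <= k < n.+1) iC ^- jump w' k) *
  (if sval w ord_max == sval w' ord_max then 1 else 0).

(* mu_n(E) = sum_{w,w' in E} D^n(w,w'); this complex number is real,
   and we record its real part as the (real-valued) mu_n. *)
Definition mun (n : nat) (E : {set Omegan n}) : R :=
  complex.Re (\sum_(w in E) \sum_(w' in E) Dn w w').

Lemma prefix_proof (n : nat) (w : Omega) :
  [ffun k : 'I_n.+1 => sval w k] ord0 == false.
Proof. by rewrite ffunE /=; case: w => s /= ->. Qed.

Definition prefix (n : nat) (w : Omega) : Omegan n :=
  exist _ [ffun k : 'I_n.+1 => sval w k] (prefix_proof n w).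

Definition cyl (n : nat) (E : {set Omegan n}) : set Omega :=
  [set w | prefix n w \in E].

Definition Cyl : set (set Omega) :=
  [set A | exists n (E : {set Omegan n}), A = cyl E].

(* mu on cylinder sets: mu(A) = mu_n(E) for any representation A = cyl n E
   (well defined by the paper; we pick one representation); 0 off cylinder sets. *)
Definition mu (A : set Omega) : R :=
  match pselect (exists nE : {n : nat & {set Omegan n}}, A = cyl (projT2 nE)) with
  | left h => let nE := projT1 (cid h) in mun (projT2 nE)
  | right _ => 0
  end.

Definition up (n : nat) (A : set Omega) : set Omega :=
  [set w | exists2 w', A w' & forall k, (k <= n)%N -> sval w k = sval w' k].

Definition beneficial (A : set Omega) : Prop :=
  exists l : R, (fun n => mu (up n A)) @ \oo --> l.

Definition muhat (A : set Omega) : R := limn (fun n => mu (up n A)).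

Definition Bset : set (set Omega) := [set A | beneficial A].

Definition inner (n : nat) (A : set Omega) : set Omega := ~` up n (~` A).

Definition upper (A : set Omega) : Prop := A = \bigcup_n inner n A.

Definition Uset : set (set Omega) := [set A | upper A].

Definition BUset : set (set Omega) :=
  [set A | upper A /\ exists l : R, (fun n => mu (inner n A)) @ \oo --> l].

Definition strongly_disjoint (A B : set Omega) : Prop :=
  exists n, up n A `&` up n B = set0.

Definition weak_quadratic_algebra (Q : set (set Omega)) : Prop :=
  Q set0 /\ Q setT /\
  forall A B C, Q A -> Q B -> Q C ->
    strongly_disjoint A B -> strongly_disjoint A C -> strongly_disjoint B C ->
    Q (A `|` B) -> Q (A `|` C) -> Q (B `|` C) -> Q (A `|` B `|` C).

Definition q_measure (Q : set (set Omega)) (nu : set Omega -> R) : Prop :=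
  (forall A, Q A -> 0 <= nu A) /\
  forall A B C, Q A -> Q B -> Q C ->
    strongly_disjoint A B -> strongly_disjoint A C -> strongly_disjoint B C ->
    Q (A `|` B) -> Q (A `|` C) -> Q (B `|` C) ->
    nu (A `|` B `|` C) =
      nu (A `|` B) + nu (A `|` C) + nu (B `|` C) - nu A - nu B - nu C.

End Defs.

(* Main.v *)
Require Import Defs.
From HB Require Import structures.
From mathcomp Require Import all_boot all_order all_algebra.
From mathcomp Require Import all_classical all_reals all_analysis.
From mathcomp Require Import complex ring lra.
Import ComplexField.
Set Implicit Arguments. Unset Strict Implicit. Unset Printing Implicit Defensive.
Import Order.TTheory GRing.Theory Num.Theory.
Local Open Scope classical_set_scope.
Local Open Scope ring_scope.

Definition bit n (x : Omegan n) (k : nat) : bool := sval x (inord k).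

Lemma bit0 n (x : Omegan n) : bit x 0 = false.
Proof. rewrite /bit; case: x => f /= /eqP <-; congr (f _); exact/val_inj/inordK. Qed.

Lemma Omegan_eq n (x y : Omegan n) : (forall k, (k <= n)%N -> bit x k = bit y k) -> x = y.
Proof.
move=> h; apply/val_inj/ffunP => k; have := h k (ltn_ord k).
by rewrite /bit inord_val.
Qed.

Lemma bit_prefix n z k : (k <= n)%N -> bit (Defs.prefix n z) k = sval z k.
Proof. by move=> hk; rewrite /bit /Defs.prefix /= ffunE inordK. Qed.

Lemma seqof_proof n (x : Omegan n) : (fun k => if (k <= n)%N then bit x k else false) 0%N = false.
Proof. by rewrite /= bit0. Qed.

Definition seqof n (x : Omegan n) : Omega := exist _ _ (seqof_proof x).

Lemma prefix_seqof n (x : Omegan n) : Defs.prefix n (seqof x) = x.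
Proof. by apply: Omegan_eq => k hk; rewrite bit_prefix //= hk. Qed.

Lemma prefix_eq n z z' : (forall k, (k <= n)%N -> sval z k = sval z' k) -> Defs.prefix n z = Defs.prefix n z'.
Proof. by move=> h; apply: Omegan_eq => k hk; rewrite !bit_prefix // h. Qed.

Lemma ext0_proof n (w : Omegan n) (a : bool) :
  [ffun k : 'I_n.+2 => if (k <= n)%N then bit w k else a] ord0 == false.
Proof. by rewrite ffunE /= bit0. Qed.

Definition ext0 n (w : Omegan n) a : Omegan n.+1 :=
  exist (fun f : {ffun 'I_n.+2 -> bool} => f ord0 == false) _ (ext0_proof w a).

Lemma bit_ext0 n (w : Omegan n) a k : (k <= n.+1)%N ->
  bit (ext0 w a) k = if (k <= n)%N then bit w k else a.
Proof. by move=> hk; rewrite /bit /= ffunE inordK. Qed.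

Lemma restr_proof n (v : Omegan n.+1) :
  [ffun k : 'I_n.+1 => bit v k] ord0 == false.
Proof. by rewrite ffunE bit0. Qed.

Definition restr n (v : Omegan n.+1) : Omegan n :=
  exist (fun f : {ffun 'I_n.+1 -> bool} => f ord0 == false) _ (restr_proof v).

Lemma bit_restr n (v : Omegan n.+1) k : (k <= n)%N -> bit (restr v) k = bit v k.
Proof. by move=> hk; rewrite {1}/bit /= ffunE inordK. Qed.

Lemma restr_ext0 n (w : Omegan n) a : restr (ext0 w a) = w.
Proof. apply: Omegan_eq => k hk; rewrite bit_restr // bit_ext0 ?hk //; exact: leqW. Qed.

Lemma ext0_restr n (v : Omegan n.+1) : v = ext0 (restr v) (bit v n.+1).
Proof.
apply: Omegan_eq => k hk; rewrite bit_ext0 //.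
case: ifP => hk'; first by rewrite bit_restr.
by have -> : k = n.+1 by apply/eqP; rewrite eqn_leq hk ltnNge hk'.
Qed.

Lemma bit_last n (x : Omegan n) : sval x ord_max = bit x n.
Proof. by rewrite /bit; congr (sval x _); apply/val_inj; rewrite /= inordK. Qed.

Section S.
Variable R : realType.
Local Notation C := (complex.complex R).
Local Notation c := (iC R).

Lemma jumpE n (w : Omegan n) k : jump w k = (bit w k != bit w k.-1) :> nat.
Proof. by []. Qed.

Lemma jump_ext0 n (w : Omegan n) a k : (k <= n)%N -> jump (ext0 w a) k = jump w k.
Proof.
move=> hk; have hk1 : (k.-1 <= n)%N by rewrite (leq_trans (leq_pred k) hk).
by rewrite !jumpE !bit_ext0 ?hk ?hk1 //; apply: leqW.
Qed.

Lemma jump_ext0_last n (w : Omegan n) a : jump (ext0 w a) n.+1 = (a != bit w n) :> nat.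
Proof. by rewrite jumpE !bit_ext0 //= ltnn leqnn eq_sym. Qed.

Definition P n (w : Omegan n) : C := \prod_(1 <= k < n.+1) c ^+ jump w k.
Definition Q n (w : Omegan n) : C := \prod_(1 <= k < n.+1) c ^- jump w k.

Lemma P_ext0 n (w : Omegan n) a : P (ext0 w a) = P w * c ^+ (a != bit w n).
Proof.
rewrite /P big_nat_recr //= jump_ext0_last; congr (_ * _).
by apply: eq_big_nat => k /andP [_ hk]; rewrite jump_ext0.
Qed.

Lemma Q_ext0 n (w : Omegan n) a : Q (ext0 w a) = Q w * c ^- (a != bit w n).
Proof.
rewrite /Q big_nat_recr //= jump_ext0_last; congr (_ * _).
by apply: eq_big_nat => k /andP [_ hk]; rewrite jump_ext0.
Qed.

Lemma DnE n (w w' : Omegan n) :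
  Dn R w w' = (2 ^+ n)^-1 * P w * Q w' * (if bit w n == bit w' n then 1 else 0).
Proof. by rewrite /Dn !bit_last. Qed.

Lemma bit_ext0_last n (w : Omegan n) a : bit (ext0 w a) n.+1 = a.
Proof. by rewrite bit_ext0 // ltnn. Qed.

Lemma cc : c * c = -1.
Proof. by apply/eqP; rewrite /iC eq_complex /= !mulr0 !mul0r !mulr1 ?add0r ?addr0 ?sub0r oppr0 !eqxx. Qed.

Lemma c_neq0 : c != 0.
Proof. by apply/eqP => h; have := cc; rewrite h mulr0 => /eqP; rewrite eq_sym oppr_eq0 oner_eq0. Qed.

Lemma cV : c^-1 = - c.
Proof.
apply: (mulfI c_neq0); rewrite divff ?c_neq0 //.
by rewrite mulrN cc opprK.
Qed.

Lemma two_inv n : (2 ^+ n)^-1 = (2 ^+ n.+1)^-1 + (2 ^+ n.+1)^-1 :> C.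
Proof.
have h2 : (2 : C) != 0 by rewrite pnatr_eq0.
have hx : (2 ^+ n : C) != 0 by rewrite expf_neq0.
by rewrite exprS; field.
Qed.

Lemma Dn_ext_sum n (w w' : Omegan n) :
  Dn R (ext0 w false) (ext0 w' false) + Dn R (ext0 w false) (ext0 w' true)
  + Dn R (ext0 w true) (ext0 w' false) + Dn R (ext0 w true) (ext0 w' true)
  = Dn R w w'.
Proof.
rewrite !DnE !bit_ext0_last !P_ext0 !Q_ext0 /= (two_inv n).
set h := ((2 : C) ^+ n.+1)^-1.
case: (bit w n); case: (bit w' n) => /=; rewrite ?expr0 ?expr1 ?invr1 ?cV;
  apply/eqP; rewrite -subr_eq0; apply/eqP.
- transitivity (- (h * P w * Q w') * (c * c + 1)); first by ring.
  by rewrite cc addNr mulr0.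
- by ring.
- by ring.
- transitivity (- (h * P w * Q w') * (c * c + 1)); first by ring.
  by rewrite cc addNr mulr0.
Qed.

Definition extS n (E : {set Omegan n}) : {set Omegan n.+1} := [set v | restr v \in E].

Lemma ext0_inj n (w : Omegan n) : ext0 w true != ext0 w false.
Proof. by apply/eqP => h; have := congr1 (fun x => bit x n.+1) h; rewrite !bit_ext0_last. Qed.

Lemma sum_ext n (E : {set Omegan n}) (f : Omegan n.+1 -> C) :
  \sum_(v in extS E) f v = \sum_(w in E) (f (ext0 w false) + f (ext0 w true)).
Proof.
rewrite (partition_big (@restr n) (mem E)) /=; last by move=> v; rewrite inE.
apply: eq_bigr => w hw.
rewrite (bigD1 (ext0 w false)) /=; last by rewrite inE restr_ext0 hw eqxx.
rewrite (bigD1 (ext0 w true)) /=; last by rewrite inE restr_ext0 hw eqxx ext0_inj.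
rewrite big1 ?addr0 //= => v /andP [/andP [/andP [hv /eqP hr] h1] h2].
move: h1 h2; rewrite (ext0_restr v) hr; case: (bit v n.+1); by rewrite eqxx.
Qed.

Lemma mun_ext n (E : {set Omegan n}) : mun R (extS E) = mun R E.
Proof.
rewrite /mun sum_ext; congr (complex.Re _).
apply: eq_bigr => w hw; rewrite !sum_ext -big_split /=.
by apply: eq_bigr => w' hw'; rewrite -(Dn_ext_sum w w') !addrA.
Qed.

Lemma cyl_inj n (E F : {set Omegan n}) : cyl E = cyl F -> E = F.
Proof.
move=> h; apply/setP => x; have := congr1 (fun X => X (seqof x)) h.
by rewrite /cyl /= prefix_seqof => e; apply/idP/idP; rewrite e.
Qed.

Lemma seqof_bit m (x : Omegan m) k : (k <= m)%N -> sval (seqof x) k = bit x k.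
Proof. by move=> hk; rewrite /= hk. Qed.

Lemma mun_cyl_gen d : forall n (E : {set Omegan n}) m (F : {set Omegan m}),
  m = (d + n)%N -> cyl F = cyl E -> mun R F = mun R E.
Proof.
elim: d => [|d IH] n E m F hm e.
  by subst m; rewrite (cyl_inj e).
subst m.
have K : forall x : Omegan (d + n).+1,
    (x \in F) = (Defs.prefix n (seqof x) \in E).
  move=> x; have := congr1 (fun X => X (seqof x)) e.
  by rewrite /cyl /= prefix_seqof => e'; apply/idP/idP; rewrite e'.
pose G := finset (fun w : Omegan (d + n) => ext0 w false \in F).
have hF : F = extS G.
  apply/setP => v; rewrite !inE !K; congr (_ \in E); apply: prefix_eq => k hk.
  have hk1 : (k <= d + n)%N by rewrite (leq_trans hk) // leq_addl.
  rewrite !seqof_bit ?(leqW hk1) // bit_ext0 ?(leqW hk1) // hk1 bit_restr //.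
have hG : cyl G = cyl E.
  have P z : Defs.prefix n (seqof (ext0 (Defs.prefix (d + n) z) false)) = Defs.prefix n z.
    apply: prefix_eq => k hk.
    have hk1 : (k <= d + n)%N by rewrite (leq_trans hk) // leq_addl.
    by rewrite seqof_bit ?(leqW hk1) // bit_ext0 ?(leqW hk1) // hk1 bit_prefix.
  by apply/seteqP; split => z; rewrite /cyl /= inE K P.
by rewrite hF mun_ext (IH n E _ G erefl hG).
Qed.

Lemma mu_cyl n (E : {set Omegan n}) : mu R (cyl E) = mun R E.
Proof.
rewrite /mu; case: pselect => [h|h]; last by exfalso; apply: h; exists (existT _ n E).
case: (cid h) => [[m F] /= e].
case: (leqP n m) => hnm.
  by apply: (mun_cyl_gen (d := (m - n)%N)); rewrite ?subnK.
symmetry; apply: (mun_cyl_gen (d := (n - m)%N)); rewrite ?subnK //; exact: ltnW.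
Qed.
End S.

Local Close Scope classical_set_scope.

Section S.
Variable R : realType.
Local Notation C := (complex.complex R).
Local Notation c := (iC R).

Lemma sumU n (A B : {set Omegan n}) (f : Omegan n -> C) : [disjoint A & B] ->
  \sum_(i in A :|: B) f i = \sum_(i in A) f i + \sum_(i in B) f i.
Proof.
move=> hd; rewrite -bigU //; apply: eq_bigl => i; by rewrite !inE.
Qed.

Definition T n (X Y : {set Omegan n}) : C := \sum_(w in X) \sum_(w' in Y) Dn R w w'.

Lemma TUl n (X Y Z : {set Omegan n}) : [disjoint X & Y] -> T (X :|: Y) Z = T X Z + T Y Z.
Proof. by move=> h; rewrite /T sumU. Qed.

Lemma TUr n (X Y Z : {set Omegan n}) : [disjoint X & Y] -> T Z (X :|: Y) = T Z X + T Z Y.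
Proof. by move=> h; rewrite /T -big_split; apply: eq_bigr => w _; rewrite sumU. Qed.

Lemma ReD (a b : C) : complex.Re (a + b) = complex.Re a + complex.Re b.
Proof. by case: a; case: b. Qed.
Lemma ReB (a b : C) : complex.Re (a - b) = complex.Re a - complex.Re b.
Proof. by case: a; case: b. Qed.

Lemma mun_quad n (E F G : {set Omegan n}) :
  [disjoint E & F] -> [disjoint E & G] -> [disjoint F & G] ->
  mun R (E :|: F :|: G) = mun R (E :|: F) + mun R (E :|: G) + mun R (F :|: G)
     - mun R E - mun R F - mun R G.
Proof.
move=> hEF hEG hFG.
have hEFG : [disjoint E :|: F & G].
  move: hEG hFG; rewrite -!setI_eq0 finset.setIUl => /eqP -> /eqP ->; by rewrite finset.setU0.
rewrite /mun -!/(T _ _) !(TUl, TUr) //.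
rewrite !ReD; ring.
Qed.

Lemma conj_c : conjc c = c^-1.
Proof. by rewrite cV; apply/eqP; rewrite eq_complex /= oppr0 !eqxx. Qed.

Lemma Q_conj n (w : Omegan n) : Q R w = conjc (P R w).
Proof.
rewrite /P rmorph_prod; apply: eq_bigr => k _; rewrite rmorphXn; change (c ^- jump w k = (conjc c) ^+ jump w k); by rewrite conj_c exprVn.
Qed.

Lemma pair_id n (w w' : Omegan n) : Dn R w w' = (2^+n)^-1 *
   ((bit w n == true)%:R * P R w * ((bit w' n == true)%:R * conjc (P R w')) +
    (bit w n == false)%:R * P R w * ((bit w' n == false)%:R * conjc (P R w'))).
Proof. by rewrite -Q_conj DnE; case: (bit w n); case: (bit w' n) => /=; ring. Qed.

Lemma mun_ge0 n (E : {set Omegan n}) : 0 <= mun R E.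
Proof.
pose S b := \sum_(w in E) (bit w n == b)%:R * P R w.
have key : \sum_(w in E) \sum_(w' in E) Dn R w w' =
    (2 ^+ n)^-1 * (S true * conjc (S true) + S false * conjc (S false)).
  rewrite /S !rmorph_sum !big_distrlr -big_split mulr_sumr; apply: eq_bigr => w _.
  rewrite -big_split mulr_sumr; apply: eq_bigr => w' _.
  rewrite !rmorphM !rmorph_nat; exact: pair_id.
have h0 : 0 <= (2 ^+ n)^-1 * (S true * conjc (S true) + S false * conjc (S false)).
  apply: mulr_ge0; first by rewrite invr_ge0 exprn_ge0 // ler0n.
  by apply: addr_ge0; apply: mulcJ_ge0.
by move: h0; rewrite -key lecE => /andP [_]; rewrite /mun.
Qed.
End S.

Local Open Scope classical_set_scope.

Definition agree n (z z' : Omega) := forall k, (k <= n)%N -> sval z k = sval z' k.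
Definition cylat n (X : set Omega) := forall z z', agree n z z' -> X z -> X z'.

Lemma agree_sym n z z' : agree n z z' -> agree n z' z.
Proof. by move=> h k hk; rewrite h. Qed.

Lemma agree_trans n z1 z2 z3 : agree n z1 z2 -> agree n z2 z3 -> agree n z1 z3.
Proof. by move=> h1 h2 k hk; rewrite h1 // h2. Qed.

Lemma agree_le m n z z' : (m <= n)%N -> agree n z z' -> agree m z z'.
Proof. by move=> hmn h k hk; apply: h; exact: leq_trans hmn. Qed.

Lemma cylat_cyl n X : cylat n X ->
  X = cyl (finset (fun x : Omegan n => `[< X (seqof x) >])).
Proof.
move=> hX; have ag z : agree n z (seqof (Defs.prefix n z)).
  by move=> k hk; rewrite seqof_bit // bit_prefix.
apply/seteqP; split => z /=; rewrite /cyl /= inE asboolE.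
  exact: hX (ag z).
by apply: hX; exact: agree_sym.
Qed.

Lemma up_cylat n A : cylat n (up n A).
Proof. move=> z z' hzz' [w' hA hw]; exists w' => // k hk; rewrite -hzz' //; exact: hw. Qed.

Lemma cylatC n X : cylat n X -> cylat n (~` X).
Proof. by move=> hX z z' h hz hz'; apply: hz; apply: (hX z'); first exact: agree_sym. Qed.

Lemma inner_cylat n A : cylat n (inner n A).
Proof. exact/cylatC/up_cylat. Qed.

Lemma upU n A B : up n (A `|` B) = up n A `|` up n B.
Proof.
apply/seteqP; split => z.
  by move=> [w [hA|hB] hw]; [left|right]; exists w.
by move=> [[w hA hw]|[w hB hw]]; exists w => //; [left|right].
Qed.

Lemma up_mono m n A : (m <= n)%N -> up n A `<=` up m A.
Proof. by move=> hmn z [w hA hw]; exists w => // k hk; apply: hw; exact: leq_trans hmn. Qed.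

Lemma sub_up n A : A `<=` up n A.
Proof. by move=> z hz; exists z. Qed.

Lemma inner_sub n A : inner n A `<=` A.
Proof. by move=> z hz; case: (pselect (A z)) => // hA; exfalso; apply: hz; exists z. Qed.

Lemma inner_monoS n A B : A `<=` B -> inner n A `<=` inner n B.
Proof. by move=> hAB z hz [w hB hw]; apply: hz; exists w => // hA; apply: hB; exact: hAB. Qed.

Lemma innerU n A B : up n A `&` up n B = set0 -> inner n (A `|` B) = inner n A `|` inner n B.
Proof.
move=> hd; apply/seteqP; split => z; last first.
  by move=> [h|h]; [apply: (inner_monoS (@subsetUl _ A B))|apply: (inner_monoS (@subsetUr _ A B))].
move=> hz; have hzAB := inner_sub hz.
case: hzAB => [hA|hB]; [left|right] => -[w hnw hw];
  (have hwAB : (A `|` B) w by case: (pselect ((A `|` B) w)) => // hn; exfalso; apply: hz; exists w);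
  (have hz0 : forall X, X z -> up n X z by move=> X hX; exists z).
- case: hwAB => [//|hB]; have : (up n A `&` up n B) z by split; [exact: hz0|exists w].
  by rewrite hd.
- case: hwAB => [hA|//]; have : (up n A `&` up n B) z by split; [exists w|exact: hz0].
  by rewrite hd.
Qed.

Lemma cylatU n X Y : cylat n X -> cylat n Y -> cylat n (X `|` Y).
Proof. by move=> hX hY z z' h [hx|hy]; [left; exact: hX h hx|right; exact: hY h hy]. Qed.

Lemma cylU n (E F : {set Omegan n}) : cyl E `|` cyl F = cyl (E :|: F).
Proof.
apply/seteqP; split => z /=; rewrite /cyl /= finset.in_setU.
  by case=> ->; rewrite ?orbT.
by case/orP; [left|right].
Qed.

Lemma cyl_disj n (E F : {set Omegan n}) : cyl E `&` cyl F = set0 -> disjoint (mem E) (mem F).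
Proof.
move=> hd; rewrite -setI_eq0; apply/eqP/setP => x; rewrite inE finset.in_set0.
apply/negbTE/negP => /andP [h1 h2].
have : (cyl E `&` cyl F) (seqof x) by split; rewrite /cyl /= prefix_seqof.
by rewrite hd.
Qed.

Section M.
Variable R : realType.

Lemma mu_ge0 X : 0 <= mu R X.
Proof. by rewrite /mu; case: pselect => // h; exact: mun_ge0. Qed.

Lemma mu_quad n X Y Z : cylat n X -> cylat n Y -> cylat n Z ->
  X `&` Y = set0 -> X `&` Z = set0 -> Y `&` Z = set0 ->
  mu R (X `|` Y `|` Z) = mu R (X `|` Y) + mu R (X `|` Z) + mu R (Y `|` Z)
    - mu R X - mu R Y - mu R Z.
Proof.
move=> /cylat_cyl -> /cylat_cyl -> /cylat_cyl ->.
set E := finset _; set F := finset _; set G := finset _.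
move=> /cyl_disj hEF /cyl_disj hEG /cyl_disj hFG.
by rewrite !cylU !mu_cyl mun_quad.
Qed.
End M.

Section Main.
Variable R : realType.

Lemma CQ (u0 u1 u2 u3 u4 u5 u6 : nat -> R) l1 l2 l3 l4 l5 l6 :
  (\forall n \near \oo, u0 n = u1 n + u2 n + u3 n - u4 n - u5 n - u6 n) ->
  u1 @ \oo --> l1 -> u2 @ \oo --> l2 -> u3 @ \oo --> l3 ->
  u4 @ \oo --> l4 -> u5 @ \oo --> l5 -> u6 @ \oo --> l6 ->
  u0 @ \oo --> l1 + l2 + l3 - l4 - l5 - l6.
Proof.
move=> he h1 h2 h3 h4 h5 h6.
have := cvgB (cvgB (cvgB (cvgD (cvgD h1 h2) h3) h4) h5) h6.
move=> hc.
have hn : {near \oo, (u1 + u2 + u3 - u4 - u5 - u6) =1 u0}.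
  by apply: filterS he => n ->.
eapply cvg_trans; first exact: (near_eq_cvg hn).
exact: hc.
Qed.

Lemma sd_mono A B N n : up N A `&` up N B = set0 -> (N <= n)%N -> up n A `&` up n B = set0.
Proof.
move=> h0 hn; rewrite -subset0 => z [h1 h2].
have : (up N A `&` up N B) z by split; apply: (up_mono hn).
by rewrite h0.
Qed.

Lemma sd_near A B : strongly_disjoint A B -> \forall n \near \oo, up n A `&` up n B = set0.
Proof. by move=> [N hN]; exists N => // n /= hn; exact: sd_mono hN hn. Qed.

Lemma UQ A B C : strongly_disjoint A B -> strongly_disjoint A C -> strongly_disjoint B C ->
  \forall n \near \oo, mu R (up n (A `|` B `|` C)) =
    mu R (up n (A `|` B)) + mu R (up n (A `|` C)) + mu R (up n (B `|` C))
    - mu R (up n A) - mu R (up n B) - mu R (up n C).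
Proof.
move=> /sd_near hAB /sd_near hAC /sd_near hBC.
near=> n; rewrite !upU; apply: mu_quad; try exact: up_cylat.
- by near: n.
- by near: n.
- by near: n.
Unshelve. all: by end_near.
Qed.

Lemma inner_disj n A B : up n A `&` up n B = set0 -> inner n A `&` inner n B = set0.
Proof.
move=> h; rewrite -subset0 => z [h1 h2].
have : (up n A `&` up n B) z by split; apply: sub_up; apply: inner_sub; eassumption.
by rewrite h.
Qed.

Lemma IQ A B C : strongly_disjoint A B -> strongly_disjoint A C -> strongly_disjoint B C ->
  \forall n \near \oo, mu R (inner n (A `|` B `|` C)) =
    mu R (inner n (A `|` B)) + mu R (inner n (A `|` C)) + mu R (inner n (B `|` C))
    - mu R (inner n A) - mu R (inner n B) - mu R (inner n C).
Proof.
move=> /sd_near hAB /sd_near hAC /sd_near hBC.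
near=> n.
have dAB : up n A `&` up n B = set0 by near: n.
have dAC : up n A `&` up n C = set0 by near: n.
have dBC : up n B `&` up n C = set0 by near: n.
have dABC : up n (A `|` B) `&` up n C = set0.
  by rewrite upU setIUl dAC dBC setU0.
rewrite (innerU dABC) !innerU //.
apply: mu_quad; try exact: inner_cylat; exact: inner_disj.
Unshelve. all: by end_near.
Qed.

End Main.

Import numFieldNormedType.Exports.

Lemma up0 n : up n set0 = set0.
Proof. by rewrite -subset0 => z [w]. Qed.

Lemma upT n : up n setT = setT.
Proof. by rewrite -subTset => z _; exists z. Qed.

Lemma inner0 n : inner n set0 = set0.
Proof. by rewrite -subset0 => z /inner_sub. Qed.

Lemma innerT n : inner n setT = setT.
Proof. by rewrite /inner setCT up0 setC0. Qed.

Lemma upper_U A B C : upper A -> upper B -> upper C -> upper (A `|` B `|` C).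
Proof.
move=> hA hB hC; apply/seteqP; split => z; last by move=> [n _ /inner_sub].
have hm n X : X `<=` A `|` B `|` C -> inner n X `<=` inner n (A `|` B `|` C).
  exact: inner_monoS.
case=> [[hz|hz]|hz].
- have [n _ h] : (\bigcup_n inner n A) z by rewrite -hA.
  by exists n => //; apply: (hm n A) h => x hx; left; left.
- have [n _ h] : (\bigcup_n inner n B) z by rewrite -hB.
  by exists n => //; apply: (hm n B) h => x hx; left; right.
- have [n _ h] : (\bigcup_n inner n C) z by rewrite -hC.
  by exists n => //; apply: (hm n C) h => x hx; right.
Qed.

Lemma cyl_cylat n (E : {set Omegan n}) : cylat n (cyl E).
Proof. by move=> z z' h; rewrite /cyl /= (prefix_eq h). Qed.

Lemma up_cylat_eq n m X : cylat n X -> (n <= m)%N -> up m X = X.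
Proof.
move=> hX hnm; apply/seteqP; split; last exact: sub_up.
move=> z [w hw hzw]; apply: (hX w) hw => k hk; rewrite hzw //; exact: leq_trans hnm.
Qed.

Theorem theorem4p7 (R : realType) :
  weak_quadratic_algebra (Bset R) /\
  weak_quadratic_algebra (BUset R) /\
  q_measure (Bset R) (@muhat R) /\
  Cyl `<=` Bset R /\
  (forall A, Cyl A -> muhat R A = mu R A).
Proof.
have cst (u : nat -> R) l : (forall n, u n = l) -> u @ \oo --> l.
  move=> h; rewrite (_ : u = fun=> l); first exact: cvg_cst.
  by apply: funext => n.
have limE (u : nat -> R) (l : R) : u @ \oo --> l -> limn u = l :> R.
  by move=> h; apply: cvg_lim.
split; [|split; [|split; [|split]]].
- split; [|split].
  + by exists (mu R set0); apply: cst => n; rewrite up0.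
  + by exists (mu R setT); apply: cst => n; rewrite upT.
  + move=> A B C [lA hA] [lB hB] [lC hC] sAB sAC sBC [lAB hAB] [lAC hAC] [lBC hBC].
    exists (lAB + lAC + lBC - lA - lB - lC).
    exact: (CQ (UQ R sAB sAC sBC) hAB hAC hBC hA hB hC).
- split; [|split].
  + split.
      apply/seteqP; split => z; first by [].
      by move=> [n _ /inner_sub].
    by exists (mu R set0); apply: cst => n; rewrite inner0.
  + split.
      by apply/seteqP; split => z // _; exists 0%N => //; rewrite innerT.
    by exists (mu R setT); apply: cst => n; rewrite innerT.
  + move=> A B C [uA [lA hA]] [uB [lB hB]] [uC [lC hC]] sAB sAC sBC
      [_ [lAB hAB]] [_ [lAC hAC]] [_ [lBC hBC]].
    split; first exact: upper_U.
    exists (lAB + lAC + lBC - lA - lB - lC).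
    exact: (CQ (IQ R sAB sAC sBC) hAB hAC hBC hA hB hC).
- split.
    move=> A [l hl]; rewrite /muhat; apply: limr_ge.
      by apply/cvg_ex; exists l.
    by apply: nearW => n; exact: mu_ge0.
  move=> A B C [lA hA] [lB hB] [lC hC] sAB sAC sBC [lAB hAB] [lAC hAC] [lBC hBC].
  have hABC := CQ (UQ R sAB sAC sBC) hAB hAC hBC hA hB hC.
  by rewrite /muhat (limE _ _ hABC) (limE _ _ hAB) (limE _ _ hAC) (limE _ _ hBC) (limE _ _ hA) (limE _ _ hB) (limE _ _ hC).
- move=> A [n [E ->]]; exists (mu R (cyl E)).
  apply: cvg_near_cst; exists n => // m /= hm.
  by rewrite (up_cylat_eq (@cyl_cylat n E) hm).
- move=> A [n [E ->]]; apply: limE; apply: cvg_near_cst; exists n => // m /= hm.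
  by rewrite (up_cylat_eq (@cyl_cylat n E) hm).
Qed.
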